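(* (i) For any positive integers $v_1, v_2$, either $\mathrm{ML}(v_1,v_2)=\frac{s}{2s+1}$ for some $s\in\mathbb{N}$, or $\mathrm{ML}(v_1,v_2)=\frac12$. (ii) For any positive integers $v_1,v_2,v_3$, either $\mathrm{ML}(v_1,v_2,v_3)=\frac{s}{3s+1}$ for some $s\in\mathbb{N}$, or $\mathrm{ML}(v_1,v_2,v_3)\ge \frac13$.
   Context: For a real number $x$, $\Vert x\Vert$ denotes the distance from $x$ to the nearest integer. For positive integers $v_1,\ldots,v_n$, the maximum loneliness is $\mathrm{ML}(v_1,\ldots,v_n)=\max_{t\in\mathbb{R}}\min_{1\le i\le n}\Vert t v_i\Vert$. Here $\mathbb{N}=\{1,2,3,\ldots\}$. *)

(* Defs.v *)
From Stdlib Require Import Reals Lra Lia List.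
Open Scope R_scope.

Definition dist_int (x : R) : R :=
  Rmin (x - IZR (Int_part x)) (1 - (x - IZR (Int_part x))).

Definition min_dist (t : R) (v : list nat) : R :=
  match v with
  | nil => 0
  | v0 :: vs => fold_left (fun acc vi => Rmin acc (dist_int (t * INR vi))) vs
                          (dist_int (t * INR v0))
  end.

Definition is_ML (v : list nat) (m : R) : Prop :=
  (exists t : R, min_dist t v = m) /\ (forall t : R, min_dist t v <= m).

(* Main.v *)
Require Import Defs.
From Stdlib Require Import Reals Lra Lia List ZArith Znumtheory Classical.
Open Scope R_scope.

Lemma frac_bounds (x : R) : 0 <= x - IZR (Int_part x) < 1.
Proof. destruct (base_Int_part x); lra. Qed.

Lemma d_ge0 x : 0 <= dist_int x.
Proof. unfold dist_int; pose proof (frac_bounds x); unfold Rmin; destruct Rle_dec; lra. Qed.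

Lemma d_le_half x : dist_int x <= 1/2.
Proof. unfold dist_int; pose proof (frac_bounds x); unfold Rmin; destruct Rle_dec; lra. Qed.

Lemma d_attain x : exists k : Z, dist_int x = Rabs (x - IZR k).
Proof.
  unfold dist_int; pose proof (frac_bounds x); set (k := Int_part x) in *.
  unfold Rmin; destruct Rle_dec.
  - exists k. rewrite Rabs_right; lra.
  - exists (k+1)%Z. rewrite plus_IZR. rewrite Rabs_left1; lra.
Qed.

Lemma d_le x (j : Z) : dist_int x <= Rabs (x - IZR j).
Proof.
  unfold dist_int; pose proof (frac_bounds x); set (k := Int_part x) in *.
  destruct (Z_le_gt_dec j k) as [Hjk|Hjk].
  - apply IZR_le in Hjk. rewrite Rabs_right by lra. unfold Rmin; destruct Rle_dec; lra.
  - assert (IZR (k+1) <= IZR j) by (apply IZR_le; lia). rewrite plus_IZR in H0.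
    rewrite Rabs_left1 by lra. unfold Rmin; destruct Rle_dec; lra.
Qed.

Lemma d_ge x B : (forall j : Z, B <= Rabs (x - IZR j)) -> B <= dist_int x.
Proof. intros H. destruct (d_attain x) as [k Hk]. rewrite Hk. apply H. Qed.

Lemma d_lip x y : dist_int x <= dist_int y + Rabs (x - y).
Proof.
  destruct (d_attain y) as [k Hk]. pose proof (d_le x k).
  pose proof (Rabs_triang (x - y) (y - IZR k)).
  replace (x - y + (y - IZR k)) with (x - IZR k) in H0 by ring. lra.
Qed.

Lemma d_shift x (k : Z) : dist_int (x + IZR k) = dist_int x.
Proof.
  apply Rle_antisym.
  - destruct (d_attain x) as [j Hj]. pose proof (d_le (x + IZR k) (j + k)).
    rewrite plus_IZR in H. replace (x + IZR k - (IZR j + IZR k)) with (x - IZR j) in H by ring. lra.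
  - destruct (d_attain (x + IZR k)) as [j Hj]. pose proof (d_le x (j - k)).
    rewrite minus_IZR in H. replace (x - (IZR j - IZR k)) with (x + IZR k - IZR j) in H by ring. lra.
Qed.

Lemma d_opp x : dist_int (- x) = dist_int x.
Proof.
  apply Rle_antisym.
  - destruct (d_attain x) as [j Hj]. pose proof (d_le (-x) (-j)).
    rewrite opp_IZR in H. replace (- x - - IZR j) with (- (x - IZR j)) in H by ring.
    rewrite Rabs_Ropp in H. lra.
  - destruct (d_attain (-x)) as [j Hj]. pose proof (d_le x (-j)).
    rewrite opp_IZR in H. replace (x - - IZR j) with (- (- x - IZR j)) in H by ring.
    rewrite Rabs_Ropp in H. lra.
Qed.

Lemma d_small (k : Z) y : 0 <= y <= 1/2 -> dist_int (IZR k + y) = y.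
Proof.
  intros Hy. apply Rle_antisym.
  - pose proof (d_le (IZR k + y) k). replace (IZR k + y - IZR k) with y in H by ring.
    rewrite Rabs_right in H; lra.
  - apply d_ge. intros j. destruct (Z_le_gt_dec j k) as [Hjk|Hjk].
    + apply IZR_le in Hjk. rewrite Rabs_right; lra.
    + assert (IZR (k+1) <= IZR j) by (apply IZR_le; lia). rewrite plus_IZR in H.
      rewrite Rabs_left1; lra.
Qed.

Lemma d_small_neg (k : Z) y : 0 <= y <= 1/2 -> dist_int (IZR k - y) = y.
Proof.
  intros Hy. rewrite <- d_opp. replace (- (IZR k - y)) with (IZR (-k) + y) by (rewrite opp_IZR; ring).
  apply d_small; auto.
Qed.

Lemma d_int_mul x (v : Z) (k : Z) : dist_int ((x + IZR k) * IZR v) = dist_int (x * IZR v).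
Proof.
  replace ((x + IZR k) * IZR v) with (x * IZR v + IZR (k * v)) by (rewrite mult_IZR; ring).
  apply d_shift.
Qed.
Definition F2 (a b : R) (t : R) := Rmin (dist_int (t * a)) (dist_int (t * b)).
Definition F3 (a b c : R) (t : R) :=
  Rmin (Rmin (dist_int (t * a)) (dist_int (t * b))) (dist_int (t * c)).

Lemma md2 t v1 v2 : min_dist t (v1 :: v2 :: nil) = F2 (INR v1) (INR v2) t.
Proof. reflexivity. Qed.
Lemma md3 t v1 v2 v3 : min_dist t (v1 :: v2 :: v3 :: nil) = F3 (INR v1) (INR v2) (INR v3) t.
Proof. reflexivity. Qed.

Lemma lip_cont (f : R -> R) K : 0 <= K -> (forall x y, f x <= f y + K * Rabs (x - y)) ->
  forall x, continuity_pt f x.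
Proof.
  intros HK Hf x0 eps Heps. exists (eps / (K + 1)). split.
  - apply Rdiv_lt_0_compat; lra.
  - intros x [_ Hx]. simpl in *. unfold R_dist in *.
    pose proof (Hf x x0). pose proof (Hf x0 x). rewrite Rabs_minus_sym in H0.
    assert (K * Rabs (x - x0) <= K * (eps / (K+1))) by (apply Rmult_le_compat_l; lra).
    assert (K * (eps / (K+1)) < eps).
    { assert (Hee : eps / (K+1) * (K+1) = eps) by (field; lra).
      assert (0 < eps / (K+1)) by (apply Rdiv_lt_0_compat; lra). nra. }
    apply Rabs_def1; lra.
Qed.

Lemma exists_max (f : R -> R) K : 0 <= K -> (forall x y, f x <= f y + K * Rabs (x - y)) ->
  (forall t (k : Z), f (t + IZR k) = f t) -> exists th, forall t, f t <= f th.
Proof.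
  intros HK Hl Hp. destruct (continuity_ab_maj f 0 1) as [M [HM _]].
  - lra.
  - intros c _. eapply lip_cont; eauto.
  - exists M. intros t. pose proof (frac_bounds t).
    replace (f t) with (f (t - IZR (Int_part t))).
    + apply HM. lra.
    + rewrite <- (Hp (t - IZR (Int_part t)) (Int_part t)). f_equal; ring.
Qed.

Lemma Rmin_lip a b c d e : a <= c + e -> b <= d + e -> Rmin a b <= Rmin c d + e.
Proof. intros. unfold Rmin; repeat destruct Rle_dec; lra. Qed.

Lemma d_lip_mul x y a : dist_int (x * a) <= dist_int (y * a) + Rabs a * Rabs (x - y).
Proof.
  pose proof (d_lip (x * a) (y * a)). replace (x * a - y * a) with (a * (x - y)) in H by ring.
  rewrite Rabs_mult in H. lra.
Qed.

Lemma F3_lip a b c x y : F3 a b c x <= F3 a b c y + (Rabs a + Rabs b + Rabs c) * Rabs (x - y).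
Proof.
  unfold F3. pose proof (Rabs_pos a). pose proof (Rabs_pos b). pose proof (Rabs_pos c).
  pose proof (Rabs_pos (x - y)).
  pose proof (d_lip_mul x y a). pose proof (d_lip_mul x y b). pose proof (d_lip_mul x y c).
  assert (0 <= Rabs a * Rabs (x-y)) by (apply Rmult_le_pos; auto).
  assert (0 <= Rabs b * Rabs (x-y)) by (apply Rmult_le_pos; auto).
  assert (0 <= Rabs c * Rabs (x-y)) by (apply Rmult_le_pos; auto).
  rewrite !Rmult_plus_distr_r.
  apply Rmin_lip; [apply Rmin_lip|]; lra.
Qed.

Lemma F2_lip a b x y : F2 a b x <= F2 a b y + (Rabs a + Rabs b) * Rabs (x - y).
Proof.
  unfold F2. pose proof (Rabs_pos a). pose proof (Rabs_pos b).
  pose proof (Rabs_pos (x - y)).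
  pose proof (d_lip_mul x y a). pose proof (d_lip_mul x y b).
  assert (0 <= Rabs a * Rabs (x-y)) by (apply Rmult_le_pos; auto).
  assert (0 <= Rabs b * Rabs (x-y)) by (apply Rmult_le_pos; auto).
  rewrite !Rmult_plus_distr_r.
  apply Rmin_lip; lra.
Qed.

Lemma F3_per (a b c : Z) t k : F3 (IZR a) (IZR b) (IZR c) (t + IZR k) = F3 (IZR a) (IZR b) (IZR c) t.
Proof. unfold F3. rewrite !d_int_mul. reflexivity. Qed.
Lemma F2_per (a b : Z) t k : F2 (IZR a) (IZR b) (t + IZR k) = F2 (IZR a) (IZR b) t.
Proof. unfold F2. rewrite !d_int_mul. reflexivity. Qed.

Lemma F3_max (a b c : Z) : exists th, forall t, F3 (IZR a) (IZR b) (IZR c) t <= F3 (IZR a) (IZR b) (IZR c) th.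
Proof.
  apply (exists_max _ (Rabs (IZR a) + Rabs (IZR b) + Rabs (IZR c))).
  - pose proof (Rabs_pos (IZR a)). pose proof (Rabs_pos (IZR b)). pose proof (Rabs_pos (IZR c)). lra.
  - intros; apply F3_lip.
  - intros; apply F3_per.
Qed.
Lemma F2_max (a b : Z) : exists th, forall t, F2 (IZR a) (IZR b) t <= F2 (IZR a) (IZR b) th.
Proof.
  apply (exists_max _ (Rabs (IZR a) + Rabs (IZR b))).
  - pose proof (Rabs_pos (IZR a)). pose proof (Rabs_pos (IZR b)). lra.
  - intros; apply F2_lip.
  - intros; apply F2_per.
Qed.
Definition Plus (m y : R) := exists k : Z, y = IZR k + m.
Definition Minus (m y : R) := exists k : Z, y = IZR k - m.

Lemma idx_step y m s : 0 < m < 1/2 -> 0 < s -> (Plus m y \/ m < dist_int y) ->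
  s * 4 <= Rmin (1/2 - m) (if Rlt_dec m (dist_int y) then dist_int y - m else 1) ->
  m < dist_int (y + s).
Proof.
  intros Hm Hs [[k Hk]|Hlt] Hle.
  - subst y. assert (s * 4 <= 1/2 - m) by (eapply Rle_trans; [apply Hle| apply Rmin_l]).
    replace (IZR k + m + s) with (IZR k + (m + s)) by ring. rewrite d_small; lra.
  - destruct (Rlt_dec m (dist_int y)); [|lra].
    assert (s * 4 <= dist_int y - m) by (eapply Rle_trans; [apply Hle| apply Rmin_r]).
    pose proof (d_lip y (y + s)). replace (y - (y + s)) with (- s) in H0 by ring.
    rewrite Rabs_Ropp, Rabs_right in H0 by lra. lra.
Qed.

Lemma eps_pos m y : 0 < m < 1/2 -> 0 < Rmin (1/2 - m) (if Rlt_dec m (dist_int y) then dist_int y - m else 1).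
Proof. intros. destruct Rlt_dec; apply Rmin_glb_lt; lra. Qed.

Lemma Rmin_gt a b m : m < a -> m < b -> m < Rmin a b.
Proof. intros; apply Rmin_glb_lt; auto. Qed.

Lemma move_right a b c t m : 0 < a -> 0 < b -> 0 < c -> 0 < m < 1/2 ->
  (Plus m (t*a) \/ m < dist_int (t*a)) -> (Plus m (t*b) \/ m < dist_int (t*b)) ->
  (Plus m (t*c) \/ m < dist_int (t*c)) -> exists t', m < F3 a b c t'.
Proof.
  intros Ha Hb Hc Hm Ia Ib Ic.
  set (ea := Rmin (1/2 - m) (if Rlt_dec m (dist_int (t*a)) then dist_int (t*a) - m else 1)).
  set (eb := Rmin (1/2 - m) (if Rlt_dec m (dist_int (t*b)) then dist_int (t*b) - m else 1)).
  set (ec := Rmin (1/2 - m) (if Rlt_dec m (dist_int (t*c)) then dist_int (t*c) - m else 1)).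
  assert (Pa : 0 < ea) by (apply eps_pos; auto).
  assert (Pb : 0 < eb) by (apply eps_pos; auto).
  assert (Pc : 0 < ec) by (apply eps_pos; auto).
  set (e := Rmin ea (Rmin eb ec)).
  assert (He : 0 < e) by (unfold e; apply Rmin_glb_lt; [exact Pa|apply Rmin_glb_lt; [exact Pb|exact Pc]]).
  assert (e <= ea) by apply Rmin_l.
  assert (e <= eb) by (eapply Rle_trans; [apply Rmin_r|apply Rmin_l]).
  assert (e <= ec) by (eapply Rle_trans; [apply Rmin_r|apply Rmin_r]).
  set (h := e / (4 * (a + b + c))).
  assert (Hh : 0 < h) by (apply Rdiv_lt_0_compat; lra).
  assert (Hh2 : h * (4 * (a+b+c)) = e) by (unfold h; field; lra).
  exists (t + h). unfold F3.
  replace ((t+h)*a) with (t*a + h*a) by ring.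
  replace ((t+h)*b) with (t*b + h*b) by ring.
  replace ((t+h)*c) with (t*c + h*c) by ring.
  apply Rmin_gt; [apply Rmin_gt|].
  - apply idx_step; auto. apply Rmult_lt_0_compat; auto. fold ea. nra.
  - apply idx_step; auto. apply Rmult_lt_0_compat; auto. fold eb. nra.
  - apply idx_step; auto. apply Rmult_lt_0_compat; auto. fold ec. nra.
Qed.

Lemma F3_opp a b c t : F3 a b c (-t) = F3 a b c t.
Proof.
  unfold F3. replace (-t*a) with (-(t*a)) by ring. replace (-t*b) with (-(t*b)) by ring.
  replace (-t*c) with (-(t*c)) by ring. rewrite !d_opp. reflexivity.
Qed.

Lemma minus_opp m y : Minus m y -> Plus m (-y).
Proof. intros [k Hk]. exists (-k)%Z. rewrite opp_IZR. lra. Qed.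

Lemma move_left a b c t m : 0 < a -> 0 < b -> 0 < c -> 0 < m < 1/2 ->
  (Minus m (t*a) \/ m < dist_int (t*a)) -> (Minus m (t*b) \/ m < dist_int (t*b)) ->
  (Minus m (t*c) \/ m < dist_int (t*c)) -> exists t', m < F3 a b c t'.
Proof.
  intros Ha Hb Hc Hm Ia Ib Ic. apply (move_right a b c (-t) m); auto.
  - replace (-t*a) with (-(t*a)) by ring. rewrite d_opp. destruct Ia; [left; apply minus_opp|right]; auto.
  - replace (-t*b) with (-(t*b)) by ring. rewrite d_opp. destruct Ib; [left; apply minus_opp|right]; auto.
  - replace (-t*c) with (-(t*c)) by ring. rewrite d_opp. destruct Ic; [left; apply minus_opp|right]; auto.
Qed.

Lemma active_pm m y : dist_int y = m -> Plus m y \/ Minus m y.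
Proof.
  intros H. destruct (d_attain y) as [k Hk]. rewrite H in Hk.
  destruct (Rcase_abs (y - IZR k)).
  - right. exists k. rewrite Rabs_left in Hk; lra.
  - left. exists k. rewrite Rabs_right in Hk; lra.
Qed.

Lemma not_plus_minus m y : 0 < m < 1/2 -> Plus m y -> Minus m y -> False.
Proof.
  intros Hm [k Hk] [j Hj]. assert (IZR (j - k) = 2 * m) by (rewrite minus_IZR; lra).
  assert (0 < IZR (j - k) < 1) by lra. destruct H0. apply lt_IZR in H0. apply lt_IZR in H1. lia.
Qed.

Lemma F3_le_each a b c t : F3 a b c t <= dist_int (t*a) /\ F3 a b c t <= dist_int (t*b) /\ F3 a b c t <= dist_int (t*c).
Proof.
  unfold F3. split; [|split].
  - eapply Rle_trans; [apply Rmin_l|apply Rmin_l].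
  - eapply Rle_trans; [apply Rmin_l|apply Rmin_r].
  - apply Rmin_r.
Qed.

Lemma F3_is_one a b c t : F3 a b c t = dist_int (t*a) \/ F3 a b c t = dist_int (t*b) \/ F3 a b c t = dist_int (t*c).
Proof. unfold F3, Rmin. repeat destruct Rle_dec; auto. Qed.

Lemma gt_or_active m y : m <= dist_int y -> m < dist_int y \/ Plus m y \/ Minus m y.
Proof.
  intros H. destruct (Rle_lt_or_eq_dec _ _ H); auto. right. apply active_pm; auto.
Qed.

Lemma crossing a b c th m : 0 < a -> 0 < b -> 0 < c -> 0 < m < 1/2 ->
  (forall t, F3 a b c t <= m) -> F3 a b c th = m ->
  (Plus m (th*a) \/ Plus m (th*b) \/ Plus m (th*c)) /\
  (Minus m (th*a) \/ Minus m (th*b) \/ Minus m (th*c)).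
Proof.
  intros Ha Hb Hc Hm Hmax Hth. destruct (F3_le_each a b c th) as [Ea [Eb Ec]]. rewrite Hth in *.
  apply gt_or_active in Ea. apply gt_or_active in Eb. apply gt_or_active in Ec.
  split.
  - destruct (classic (Plus m (th*a) \/ Plus m (th*b) \/ Plus m (th*c))) as [?|Hn]; auto. exfalso.
    destruct (move_left a b c th m) as [t' Ht']; auto; try (pose proof (Hmax t'); lra);
    [destruct Ea as [?|[?|?]]|destruct Eb as [?|[?|?]]|destruct Ec as [?|[?|?]]]; tauto.
  - destruct (classic (Minus m (th*a) \/ Minus m (th*b) \/ Minus m (th*c))) as [?|Hn]; auto. exfalso.
    destruct (move_right a b c th m) as [t' Ht']; auto; try (pose proof (Hmax t'); lra);
    [destruct Ea as [?|[?|?]]|destruct Eb as [?|[?|?]]|destruct Ec as [?|[?|?]]]; tauto.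
Qed.

Lemma no_single a b c t m : 0 < a -> 0 < b -> 0 < c -> 0 < m < 1/2 ->
  (forall t', F3 a b c t' <= m) -> m < dist_int (t*a) -> m < dist_int (t*b) -> m <= dist_int (t*c) -> False.
Proof.
  intros Ha Hb Hc Hm Hmax Ia Ib Ic. apply gt_or_active in Ic. destruct Ic as [Ic|[Ic|Ic]].
  - pose proof (Hmax t). assert (m < F3 a b c t) by (unfold F3; apply Rmin_gt; [apply Rmin_gt|]; auto). lra.
  - destruct (move_right a b c t m) as [t' Ht']; auto. pose proof (Hmax t'); lra.
  - destruct (move_left a b c t m) as [t' Ht']; auto. pose proof (Hmax t'); lra.
Qed.
Ltac zr := repeat (rewrite ?minus_IZR, ?plus_IZR, ?mult_IZR, ?opp_IZR).
Open Scope Z_scope.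

Lemma gcd_split X Y : 0 < X -> 0 < Y -> exists g a b, 0 < g /\ 0 < a /\ 0 < b /\
  X = g * a /\ Y = g * b /\ Z.gcd a b = 1 /\ g = Z.gcd X Y.
Proof.
  intros HX HY. set (g := Z.gcd X Y).
  assert (Hg : 0 < g).
  { pose proof (Z.gcd_nonneg X Y). destruct (Z.eq_dec g 0) as [E|E].
    - apply Z.gcd_eq_0 in E. lia.
    - unfold g in *; lia. }
  destruct (Z.gcd_divide_l X Y) as [a Ha]. destruct (Z.gcd_divide_r X Y) as [b Hb].
  fold g in Ha, Hb. exists g, a, b.
  assert (0 < a) by nia. assert (0 < b) by nia.
  repeat split; try lia.
  pose proof (Z.gcd_mul_mono_l a b g). replace (g * a) with X in H1 by lia.
  replace (g * b) with Y in H1 by lia.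
  fold g in H1. rewrite Z.abs_eq in H1 by lia. pose proof (Z.gcd_nonneg a b). nia.
Qed.

Lemma gcd3_split X Y W : 0 < X -> 0 < Y -> 0 < W -> exists d x y z, 0 < d /\ 0 < x /\ 0 < y /\ 0 < z /\
  X = d * x /\ Y = d * y /\ W = d * z /\ Z.gcd (Z.gcd x y) z = 1.
Proof.
  intros HX HY HW. set (d := Z.gcd (Z.gcd X Y) W).
  assert (Hd : 0 < d).
  { pose proof (Z.gcd_nonneg (Z.gcd X Y) W). destruct (Z.eq_dec d 0) as [E|E].
    - apply Z.gcd_eq_0 in E. lia.
    - unfold d in *; lia. }
  assert (D1 : (d | X)) by (eapply Z.divide_trans; [apply Z.gcd_divide_l|apply Z.gcd_divide_l]).
  assert (D2 : (d | Y)) by (eapply Z.divide_trans; [apply Z.gcd_divide_l|apply Z.gcd_divide_r]).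
  assert (D3 : (d | W)) by apply Z.gcd_divide_r.
  destruct D1 as [x Hx]. destruct D2 as [y Hy]. destruct D3 as [z Hz].
  exists d, x, y, z. assert (0 < x) by nia. assert (0 < y) by nia. assert (0 < z) by nia.
  repeat split; try lia.
  assert (E : d = d * Z.gcd (Z.gcd x y) z).
  { unfold d at 1. rewrite Hx, Hy, Hz. rewrite !(Z.mul_comm _ d).
    rewrite Z.gcd_mul_mono_l, Z.abs_eq by lia. rewrite Z.gcd_mul_mono_l, Z.abs_eq by lia. reflexivity. }
  pose proof (Z.gcd_nonneg (Z.gcd x y) z). nia.
Qed.

Lemma bezout_n a b : Z.gcd a b = 1 -> exists u w, u * a + w * (a + b) = 1.
Proof.
  intros H. apply Z.gcd_bezout in H. destruct H as [al [be Hb]].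
  exists (al - be), be. lia.
Qed.

Lemma IZR_small (z : Z) : (Rabs (IZR z) < 1)%R -> z = 0.
Proof.
  intros H. apply Rabs_def2 in H. destruct H.
  apply lt_IZR in H. apply (lt_IZR (-1)) in H0. lia.
Qed.

Close Scope Z_scope.

Lemma Rdiv_le_0_compat a b : 0 <= a -> 0 < b -> 0 <= a / b.
Proof. intros. unfold Rdiv. apply Rmult_le_pos; auto. left; apply Rinv_0_lt_compat; auto. Qed.

Lemma half_dec y b : b < dist_int y -> exists P : Z, Rabs (y - IZR P - 1/2) < 1/2 - b.
Proof.
  intros H. pose proof (d_le_half y). destruct (d_attain y) as [k Hk]. rewrite Hk in *.
  destruct (Rcase_abs (y - IZR k)).
  - rewrite Rabs_left in * by lra. exists (k - 1)%Z. rewrite minus_IZR.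
    rewrite Rabs_right; lra.
  - rewrite Rabs_right in * by lra. exists k. rewrite Rabs_left1; lra.
Qed.

Lemma F2_upper (g a b s : Z) t : (0 < g)%Z -> (0 < a)%Z -> (0 < b)%Z -> (a + b = 2 * s + 1)%Z ->
  F2 (IZR (g * a)) (IZR (g * b)) t <= IZR s / IZR (a + b).
Proof.
  intros Hg Ha Hb Hn. set (n := (a + b)%Z) in *.
  assert (Rn : 0 < IZR n) by (apply IZR_lt; lia).
  apply Rnot_lt_le. intros Hlt. unfold F2 in Hlt.
  assert (H1 : IZR s / IZR n < dist_int (t * IZR (g * a))) by (eapply Rlt_le_trans; [apply Hlt|apply Rmin_l]).
  assert (H2 : IZR s / IZR n < dist_int (t * IZR (g * b))) by (eapply Rlt_le_trans; [apply Hlt|apply Rmin_r]).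
  apply half_dec in H1. apply half_dec in H2. destruct H1 as [P1 H1]. destruct H2 as [P2 H2].
  assert (E : 1/2 - IZR s / IZR n = 1 / (2 * IZR n)).
  { unfold n in *. rewrite Hn. rewrite plus_IZR, mult_IZR. field. rewrite <- mult_IZR, <- plus_IZR. apply not_0_IZR. lia. }
  rewrite E in H1, H2.
  set (u1 := t * IZR (g * a) - IZR P1 - 1 / 2) in *.
  set (u2 := t * IZR (g * b) - IZR P2 - 1 / 2) in *.
  set (z := (2 * (a * P2 - b * P1) + a - b)%Z).
  assert (Ez : IZR z = 2 * (IZR b * u1 - IZR a * u2)).
  { unfold z, u1, u2. zr. field. }
  assert (Rabs (IZR z) < 1).
  { rewrite Ez. apply Rabs_def2 in H1. apply Rabs_def2 in H2. destruct H1, H2.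
    assert (Ra : 0 < IZR a) by (apply IZR_lt; lia). assert (Rb : 0 < IZR b) by (apply IZR_lt; lia).
    assert (IZR a + IZR b = IZR n) by (unfold n; rewrite plus_IZR; ring).
    assert (Hq : (IZR a + IZR b) * (1 / (2 * IZR n)) = 1/2) by (rewrite H3; field; lra).
    apply Rabs_def1; nra. }
  apply IZR_small in H. unfold z in H. lia.
Qed.

Lemma part1 (X Y : Z) m : (0 < X)%Z -> (0 < Y)%Z ->
  (exists t, F2 (IZR X) (IZR Y) t = m) -> (forall t, F2 (IZR X) (IZR Y) t <= m) ->
  (exists s : Z, (1 <= s)%Z /\ m = IZR s / (2 * IZR s + 1)) \/ m = 1/2.
Proof.
  intros HX HY [th Hth] Hmax.
  destruct (gcd_split X Y HX HY) as [g [a [b [Hg [Ha [Hb [EX [EY [Hab _]]]]]]]]].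
  assert (Mle : m <= 1/2).
  { rewrite <- Hth. unfold F2. eapply Rle_trans; [apply Rmin_l| apply d_le_half]. }
  assert (Rg : 0 < IZR g) by (apply IZR_lt; lia).
  destruct (Z.Even_or_Odd a) as [[a' Ea]|[a' Ea]]; destruct (Z.Even_or_Odd b) as [[b' Eb]|[b' Eb]].
  - exfalso. assert (Hd : (2 | Z.gcd a b)%Z) by (apply Z.gcd_greatest; [exists a'|exists b']; lia).
    rewrite Hab in Hd. destruct Hd as [k Hk]. lia.
  - left. set (s := (a' + b')%Z). exists s. 
    assert (Hn : (a + b = 2 * s + 1)%Z) by (unfold s; lia).
    destruct (bezout_n a b Hab) as [u [w Huw]].
    set (n := (a + b)%Z) in *. set (L := (s * u)%Z).
    assert (Rn : 0 < IZR n) by (apply IZR_lt; lia).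
    assert (Hs1 : (1 <= s)%Z) by (unfold s; lia).
    split; [exact Hs1|].
    assert (Ess : IZR s / (2 * IZR s + 1) = IZR s / IZR n).
    { rewrite Hn, plus_IZR, mult_IZR. reflexivity. }
    rewrite Ess. apply Rle_antisym.
    + rewrite <- Hth. subst X Y. apply F2_upper; auto.
    + set (t := IZR L / (IZR g * IZR n)).
      assert (Hsn : 0 <= IZR s / IZR n <= 1/2).
      { split. apply Rdiv_le_0_compat; auto. apply IZR_le; lia.
        apply Rmult_le_reg_r with (IZR n); auto. unfold Rdiv. rewrite Rmult_assoc, Rinv_l by lra.
        rewrite Hn, plus_IZR, mult_IZR. lra. }
      assert (T1 : t * IZR X = IZR (- s * w) + IZR s / IZR n).
      { unfold t. subst X. rewrite mult_IZR. 
        assert (IZR u * IZR a = 1 - IZR w * IZR n) by (rewrite <- !mult_IZR, <- minus_IZR; f_equal; lia).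
        unfold L. zr.
        replace (IZR s * IZR u / (IZR g * IZR n) * (IZR g * IZR a)) with (IZR s * (IZR u * IZR a) / IZR n) by (field; lra).
        rewrite H. field. lra. }
      assert (T2 : t * IZR Y = IZR (L + s * w) - IZR s / IZR n).
      { unfold t. subst Y. rewrite mult_IZR.
        assert (IZR b = IZR n - IZR a) by (unfold n; rewrite plus_IZR; ring).
        assert (IZR u * IZR a = 1 - IZR w * IZR n) by (rewrite <- !mult_IZR, <- minus_IZR; f_equal; lia).
        unfold L. zr. rewrite H.
        replace (IZR s * IZR u / (IZR g * IZR n) * (IZR g * (IZR n - IZR a))) with (IZR s * IZR u - IZR s * (IZR u * IZR a) / IZR n) by (field; lra).
        rewrite H0. field. lra. }
      apply Rle_trans with (F2 (IZR X) (IZR Y) t); [|apply Hmax].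
      unfold F2. rewrite T1, T2, d_small, d_small_neg by auto. unfold Rmin; destruct Rle_dec; lra.
  - left. set (s := (a' + b')%Z). exists s. 
    assert (Hn : (a + b = 2 * s + 1)%Z) by (unfold s; lia).
    destruct (bezout_n a b Hab) as [u [w Huw]].
    set (n := (a + b)%Z) in *. set (L := (s * u)%Z).
    assert (Rn : 0 < IZR n) by (apply IZR_lt; lia).
    assert (Hs1 : (1 <= s)%Z) by (unfold s; lia).
    split; [exact Hs1|].
    assert (Ess : IZR s / (2 * IZR s + 1) = IZR s / IZR n).
    { rewrite Hn, plus_IZR, mult_IZR. reflexivity. }
    rewrite Ess. apply Rle_antisym.
    + rewrite <- Hth. subst X Y. apply F2_upper; auto.
    + set (t := IZR L / (IZR g * IZR n)).
      assert (Hsn : 0 <= IZR s / IZR n <= 1/2).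
      { split. apply Rdiv_le_0_compat; auto. apply IZR_le; lia.
        apply Rmult_le_reg_r with (IZR n); auto. unfold Rdiv. rewrite Rmult_assoc, Rinv_l by lra.
        rewrite Hn, plus_IZR, mult_IZR. lra. }
      assert (T1 : t * IZR X = IZR (- s * w) + IZR s / IZR n).
      { unfold t. subst X. rewrite mult_IZR. 
        assert (IZR u * IZR a = 1 - IZR w * IZR n) by (rewrite <- !mult_IZR, <- minus_IZR; f_equal; lia).
        unfold L. zr.
        replace (IZR s * IZR u / (IZR g * IZR n) * (IZR g * IZR a)) with (IZR s * (IZR u * IZR a) / IZR n) by (field; lra).
        rewrite H. field. lra. }
      assert (T2 : t * IZR Y = IZR (L + s * w) - IZR s / IZR n).
      { unfold t. subst Y. rewrite mult_IZR.
        assert (IZR b = IZR n - IZR a) by (unfold n; rewrite plus_IZR; ring).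
        assert (IZR u * IZR a = 1 - IZR w * IZR n) by (rewrite <- !mult_IZR, <- minus_IZR; f_equal; lia).
        unfold L. zr. rewrite H.
        replace (IZR s * IZR u / (IZR g * IZR n) * (IZR g * (IZR n - IZR a))) with (IZR s * IZR u - IZR s * (IZR u * IZR a) / IZR n) by (field; lra).
        rewrite H0. field. lra. }
      apply Rle_trans with (F2 (IZR X) (IZR Y) t); [|apply Hmax].
      unfold F2. rewrite T1, T2, d_small, d_small_neg by auto. unfold Rmin; destruct Rle_dec; lra.
  - right. apply Rle_antisym; auto.
    set (t := / (2 * IZR g)).
    apply Rle_trans with (F2 (IZR X) (IZR Y) t); [|apply Hmax].
    assert (T1 : t * IZR X = IZR a' + 1/2) by (unfold t; subst X; rewrite Ea, mult_IZR, plus_IZR, mult_IZR; field; lra).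
    assert (T2 : t * IZR Y = IZR b' + 1/2) by (unfold t; subst Y; rewrite Eb, mult_IZR, plus_IZR, mult_IZR; field; lra).
    unfold F2. rewrite T1, T2, !d_small by lra. unfold Rmin; destruct Rle_dec; lra.
Qed.
Open Scope Z_scope.

Lemma walk (x0 d N lo hi K : Z) : 0 < N -> Z.abs d + (hi - lo) < N -> 0 <= K ->
  (forall i, 0 <= i <= K -> exists k, lo <= x0 + i * d - k * N <= hi) ->
  exists k, forall i, 0 <= i <= K -> lo <= x0 + i * d - k * N <= hi.
Proof.
  intros HN Hd HK H. destruct (H 0) as [k0 Hk0]; [lia|]. exists k0.
  assert (Hgen : forall i, 0 <= i -> i <= K -> lo <= x0 + i * d - k0 * N <= hi).
  2:{ intros i Hi; apply Hgen; lia. }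
  apply (natlike_ind (fun i => i <= K -> lo <= x0 + i * d - k0 * N <= hi)).
  - intros _. exact Hk0.
  - intros i' Hi' IH Hle. destruct (H (Z.succ i')) as [k' Hk']; [lia|].
    specialize (IH ltac:(lia)).
    assert (E : (k' - k0) * N = (x0 + Z.succ i' * d - k0 * N) - (x0 + Z.succ i' * d - k' * N)) by ring.
    assert (Hb : - N < (k' - k0) * N < N).
    { rewrite E. replace (x0 + Z.succ i' * d - k0 * N) with (x0 + i' * d - k0 * N + d) by (unfold Z.succ; ring).
      destruct (Z.abs_spec d) as [[? ?]|[? ?]]; lia. }
    assert (k' = k0).
    { destruct (Z.lt_total k' k0) as [?|[?|?]]; auto; exfalso; nia. }
    subst k'. exact Hk'.
Qed.

Lemma walk_span (x0 d N lo hi K : Z) : 0 < N -> Z.abs d + (hi - lo) < N -> 0 <= K ->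
  (forall i, 0 <= i <= K -> exists k, lo <= x0 + i * d - k * N <= hi) ->
  Z.abs (K * d) <= hi - lo.
Proof.
  intros HN Hd HK H. destruct (walk x0 d N lo hi K HN Hd HK H) as [k Hk].
  pose proof (Hk 0 ltac:(lia)). pose proof (Hk K ltac:(lia)).
  destruct (Z.abs_spec (K * d)) as [[? ?]|[? ?]]; lia.
Qed.

Lemma div2_spec x : 2 * (x / 2) <= x <= 2 * (x / 2) + 1.
Proof. pose proof (Z.div_mod x 2 ltac:(lia)). pose proof (Z.mod_pos_bound x 2 ltac:(lia)). lia. Qed.

Lemma G1 (n c w : Z) : 1 <= c -> 3 * c <= n - 2 -> 1 <= w -> 2 * w <= n ->
  (forall r, c + 1 <= r <= n - c - 1 -> exists k, Z.abs (r * w - k * n) <= c - 1) -> False.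
Proof.
  intros Hc Hn Hw1 Hw2 H.
  destruct (Z.eq_dec w 1) as [E1|E1].
  { subst w. destruct (H (c+1) ltac:(lia)) as [k Hk].
    destruct (Z.le_gt_cases k 0); destruct (Z.abs_spec ((c + 1) * 1 - k * n)) as [[? ?]|[? ?]]; nia. }
  destruct (Z_le_gt_dec w (n - 2 * c + 1)) as [Eb|Eb].
  { assert (Hs : Z.abs ((n - 2 * c - 2) * w) <= (c - 1) - (- (c - 1))).
    { apply (walk_span ((c + 1) * w) w n (- (c - 1)) (c - 1)); try lia.
      intros i Hi. destruct (H (c + 1 + i) ltac:(lia)) as [k Hk]. exists k.
      replace ((c + 1) * w + i * w - k * n) with ((c + 1 + i) * w - k * n) by ring.
      destruct (Z.abs_spec ((c + 1 + i) * w - k * n)) as [[? ?]|[? ?]]; lia. }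
    rewrite Z.abs_eq in Hs by nia. nia. }
  set (u := n - 2 * w).
  destruct (Z.eq_dec u 0) as [U0|U0].
  { assert (exists r, c + 1 <= r <= n - c - 1 /\ exists h, r = 2 * h + 1) as [r [Hr [h Hh]]].
    { destruct (Z.Even_or_Odd c) as [[c' Ec]|[c' Ec]].
      - exists (c + 1). split; [lia|]. exists c'. lia.
      - exists (c + 2). split; [lia|]. exists (c' + 1). lia. }
    destruct (H r Hr) as [k Hk].
    assert (E : 2 * (r * w - k * n) = n * (r - 2 * k)) by (unfold u in U0; nia).
    destruct (Z.le_gt_cases (r - 2 * k) 0).
    - assert (r - 2 * k <= -1) by lia.
      destruct (Z.abs_spec (r * w - k * n)) as [[? ?]|[? ?]]; nia.
    - destruct (Z.abs_spec (r * w - k * n)) as [[? ?]|[? ?]]; nia. }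
  assert (Hu1 : 1 <= u) by (unfold u in *; lia).
  assert (Hu2 : u <= 4 * c - 4 - n) by (unfold u; lia).
  set (j0 := (c + 2) / 2). set (j1 := (n - c - 2) / 2).
  assert (Hj0 : c + 1 <= 2 * j0 <= c + 2) by (pose proof (div2_spec (c + 2)); unfold j0; lia).
  assert (Hj1 : n - c - 3 <= 2 * j1 <= n - c - 2) by (pose proof (div2_spec (n - c - 2)); unfold j1; lia).
  set (K := j1 - j0).
  assert (HK : 0 <= K) by (unfold K; lia).
  assert (We : exists kE, forall i, 0 <= i <= K -> - (c - 1) <= j0 * u + i * u - kE * n <= c - 1).
  { apply walk; try lia.
    intros i Hi. destruct (H (2 * (j0 + i)) ltac:(lia)) as [k Hk]. exists (j0 + i - k).
    assert (E : 2 * (j0 + i) * w - k * n = - (j0 * u + i * u - (j0 + i - k) * n)) by (unfold u; ring).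
    rewrite E, Z.abs_opp in Hk.
    destruct (Z.abs_spec (j0 * u + i * u - (j0 + i - k) * n)) as [[? ?]|[? ?]]; lia. }
  assert (Wo : exists kO, forall i, 0 <= i <= K -> - (c - 1) <= (w - j0 * u) + i * (- u) - kO * n <= c - 1).
  { apply walk; try lia.
    intros i Hi. destruct (H (2 * (j0 + i) + 1) ltac:(lia)) as [k Hk]. exists (k - j0 - i).
    assert (E : (2 * (j0 + i) + 1) * w - k * n = (w - j0 * u) + i * (- u) - (k - j0 - i) * n) by (unfold u; ring).
    rewrite E in Hk.
    destruct (Z.abs_spec ((w - j0 * u) + i * (- u) - (k - j0 - i) * n)) as [[? ?]|[? ?]]; lia. }
  destruct We as [kE HE]. destruct Wo as [kO HO].
  pose proof (HE 0 ltac:(lia)) as E0. pose proof (HE K ltac:(lia)) as EK.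
  pose proof (HO 0 ltac:(lia)) as O0. pose proof (HO K ltac:(lia)) as OK.
  set (Kc := kE + kO).
  assert (HC : Z.abs (w - Kc * n) <= 2 * c - 2 - K * u).
  { unfold Kc. destruct (Z.abs_spec (w - (kE + kO) * n)) as [[? ?]|[? ?]]; nia. }
  assert (Hw : w <= Z.abs (w - Kc * n)).
  { destruct (Z.le_gt_cases Kc 0); destruct (Z.abs_spec (w - Kc * n)) as [[? ?]|[? ?]]; nia. }
  assert (H2K : 2 * K >= n - 2 * c - 5) by (unfold K; lia).
  assert (Hc7 : 7 <= c) by lia.
  assert ((2 * K - 1) * u >= 2 * K - 1) by nia.
  nia.
Qed.

Lemma G2 (n c W : Z) : 1 <= c -> 3 * c <= n - 2 ->
  (forall r, c + 1 <= r <= n - c - 1 -> exists k, Z.abs (2 * r * W - (2 * k + 1) * n) <= 4 * c - 2 - n) -> False.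
Proof.
  intros Hc Hn H. set (E := 4 * c - 2 - n).
  destruct (H (c + 1) ltac:(lia)) as [k1 Hk1]. destruct (H (c + 2) ltac:(lia)) as [k2 Hk2].
  fold E in Hk1, Hk2.
  assert (HE : 0 <= E) by (pose proof (Z.abs_nonneg (2 * (c + 1) * W - (2 * k1 + 1) * n)); lia).
  set (dl := 2 * W - 2 * (k2 - k1) * n).
  assert (Hdl : Z.abs dl <= 2 * E).
  { unfold dl. destruct (Z.abs_spec (2 * (c + 1) * W - (2 * k1 + 1) * n)) as [[? ?]|[? ?]];
    destruct (Z.abs_spec (2 * (c + 2) * W - (2 * k2 + 1) * n)) as [[? ?]|[? ?]];
    destruct (Z.abs_spec (2 * W - 2 * (k2 - k1) * n)) as [[? ?]|[? ?]]; nia. }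
  set (K := n - 2 * c - 2).
  assert (Hs : Z.abs (K * dl) <= E - (- E)).
  { apply (walk_span (2 * (c + 1) * W - (2 * k1 + 1) * n) dl (2 * n) (- E) E); try lia.
    intros i Hi. destruct (H (c + 1 + i) ltac:(lia)) as [k Hk]. fold E in Hk.
    exists (k - k1 - i * (k2 - k1)).
    assert (Eq : 2 * (c + 1) * W - (2 * k1 + 1) * n + i * dl - (k - k1 - i * (k2 - k1)) * (2 * n)
                 = 2 * (c + 1 + i) * W - (2 * k + 1) * n) by (unfold dl; ring).
    rewrite Eq. destruct (Z.abs_spec (2 * (c + 1 + i) * W - (2 * k + 1) * n)) as [[? ?]|[? ?]]; lia. }
  destruct (Z.eq_dec dl 0) as [D0|D0].
  - assert (Eq : 2 * (c + 1) * W - (2 * k1 + 1) * n = n * (2 * (c + 1) * (k2 - k1) - 2 * k1 - 1)).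
    { assert (2 * W = 2 * (k2 - k1) * n) by (unfold dl in D0; lia). nia. }
    rewrite Eq in Hk1. set (f := 2 * (c + 1) * (k2 - k1) - 2 * k1 - 1) in *.
    destruct (Z.le_gt_cases f 0).
    + assert (f <= -1) by (unfold f; lia).
      destruct (Z.abs_spec (n * f)) as [[? ?]|[? ?]]; nia.
    + destruct (Z.abs_spec (n * f)) as [[? ?]|[? ?]]; nia.
  - assert (Hev : exists h, dl = 2 * h) by (exists (W - (k2 - k1) * n); unfold dl; ring).
    destruct Hev as [h Hh]. assert (Z.abs dl >= 2) by (destruct (Z.abs_spec dl) as [[? ?]|[? ?]]; lia).
    rewrite Z.abs_mul, (Z.abs_eq K) in Hs by (unfold K; lia).
    assert (K * Z.abs dl >= K * 2) by nia. unfold K in *. lia.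
Qed.

Close Scope Z_scope.
Lemma Rabs_frac x d : 0 < d -> Rabs (x / d) = Rabs x / d.
Proof. intros. unfold Rdiv. rewrite Rabs_mult, Rabs_inv, (Rabs_right d) by lra. reflexivity. Qed.

Lemma d_frac_ge (N D B : Z) : (0 < D)%Z -> (forall k, B <= Z.abs (N - k * D))%Z ->
  IZR B / IZR D <= dist_int (IZR N / IZR D).
Proof.
  intros HD H. assert (RD : 0 < IZR D) by (apply IZR_lt; lia). apply d_ge. intros j.
  replace (IZR N / IZR D - IZR j) with (IZR (N - j * D) / IZR D) by (zr; field; lra).
  rewrite Rabs_frac by auto. rewrite <- abs_IZR. unfold Rdiv. apply Rmult_le_compat_r.
  - left; apply Rinv_0_lt_compat; auto.
  - apply IZR_le. apply H.
Qed.

Lemma d_frac_le (N D k : Z) : (0 < D)%Z -> dist_int (IZR N / IZR D) <= IZR (Z.abs (N - k * D)) / IZR D.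
Proof.
  intros HD. assert (RD : 0 < IZR D) by (apply IZR_lt; lia).
  eapply Rle_trans; [apply (d_le _ k)|].
  replace (IZR N / IZR D - IZR k) with (IZR (N - k * D) / IZR D) by (zr; field; lra).
  rewrite Rabs_frac by auto. rewrite <- abs_IZR. lra.
Qed.

Open Scope Z_scope.
Lemma r_far (r n c K : Z) : c + 1 <= r <= n - c - 1 -> c + 1 <= Z.abs (r - K * n).
Proof.
  intros Hr. destruct (Z.le_gt_cases K 0); destruct (Z.abs_spec (r - K * n)) as [[? ?]|[? ?]]; nia.
Qed.

Lemma abs_le_iff x B : Z.abs x <= B <-> - B <= x <= B.
Proof. destruct (Z.abs_spec x) as [[? ?]|[? ?]]; lia. Qed.
Close Scope Z_scope.

Lemma core (g a b z p q : Z) (m th : R) :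
  (0 < g)%Z -> (0 < a)%Z -> (0 < b)%Z -> (0 < z)%Z -> Z.gcd a b = 1%Z -> Z.gcd g z = 1%Z ->
  (forall t, F3 (IZR (g * a)) (IZR (g * b)) (IZR z) t <= m) ->
  F3 (IZR (g * a)) (IZR (g * b)) (IZR z) th = m -> 0 < m -> m < 1/3 ->
  th * IZR (g * a) = IZR p + m -> th * IZR (g * b) = IZR q - m ->
  exists s : Z, (1 <= s)%Z /\ m = IZR s / (3 * IZR s + 1).
Proof.
  intros Hg Ha Hb Hz Hab Hgz Hmax Hth Hm0 Hm3 Ex Ey.
  set (n := (a + b)%Z). set (M := (g * n)%Z). set (L := (p + q)%Z).
  assert (Rn : 0 < IZR n) by (apply IZR_lt; unfold n; lia).
  assert (RM : 0 < IZR M) by (apply IZR_lt; unfold M, n; nia).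
  assert (Rg : 0 < IZR g) by (apply IZR_lt; lia).
  assert (HthM : th = IZR L / IZR M).
  { assert (th * IZR M = IZR L).
    { unfold M, n, L. zr. rewrite mult_IZR in Ex, Ey. lra. }
    rewrite <- H. field. lra. }
  set (c := (L * a - p * n)%Z).
  assert (Hmc : m = IZR c / IZR n).
  { assert (m = th * IZR (g * a) - IZR p) by lra. rewrite H, HthM.
    unfold c, M. zr. field. split; lra. }
  assert (Hc1 : (1 <= c)%Z).
  { assert (0 < IZR c). { rewrite Hmc in Hm0. apply Rmult_lt_reg_r with (/ IZR n).
      apply Rinv_0_lt_compat; auto. rewrite Rmult_0_l. exact Hm0. }
    apply lt_IZR in H. lia. }
  assert (Hc3 : (3 * c < n)%Z).
  { apply lt_IZR. rewrite mult_IZR. rewrite Hmc in Hm3.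
    apply Rmult_lt_compat_r with (r := IZR n) in Hm3; auto.
    unfold Rdiv in Hm3. rewrite Rmult_assoc, Rinv_l in Hm3 by lra. lra. }
  destruct (Z_le_gt_dec (n - 1) (3 * c)) as [Hfin|Hcon].
  { exists c. split; auto. rewrite Hmc. f_equal. replace n with (3 * c + 1)%Z by lia. zr. reflexivity. }
  exfalso. assert (Hcn : (3 * c <= n - 2)%Z) by lia.
  assert (H : forall L' : Z, (forall k, c + 1 <= Z.abs (L' * a - k * n))%Z ->
              exists k, (Z.abs (L' * z - k * M) <= g * c - 1)%Z).
  { intros L' HL'. apply NNPP. intros Hne.
    assert (Hall : forall k, (g * c <= Z.abs (L' * z - k * M))%Z).
    { intros k. destruct (Z_le_gt_dec (g * c) (Z.abs (L' * z - k * M))); auto.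
      exfalso. apply Hne. exists k. lia. }
    set (t := IZR L' / IZR M).
    assert (Tx : t * IZR (g * a) = IZR (L' * a) / IZR n) by (unfold t, M; zr; field; lra).
    assert (Eb : IZR b = IZR n - IZR a) by (unfold n; zr; ring).
    assert (Ty : t * IZR (g * b) = - (IZR (L' * a) / IZR n) + IZR L') by (unfold t, M; zr; rewrite Eb; field; lra).
    assert (Tz : t * IZR z = IZR (L' * z) / IZR M) by (unfold t; zr; field; lra).
    assert (Dx : IZR (c + 1) / IZR n <= dist_int (t * IZR (g * a))) by (rewrite Tx; apply d_frac_ge; auto; unfold n; lia).
    assert (Dy : IZR (c + 1) / IZR n <= dist_int (t * IZR (g * b))) by (rewrite Ty, d_shift, d_opp; rewrite <- Tx; auto).
    assert (Dz : IZR (g * c) / IZR M <= dist_int (t * IZR z)) by (rewrite Tz; apply d_frac_ge; auto; unfold M, n; nia).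
    assert (Ec : IZR (g * c) / IZR M = m) by (rewrite Hmc; unfold M; zr; field; lra).
    assert (Ec1 : m < IZR (c + 1) / IZR n) by (rewrite Hmc; zr; unfold Rdiv; apply Rmult_lt_compat_r; [apply Rinv_0_lt_compat; auto|lra]).
    apply (no_single (IZR (g * a)) (IZR (g * b)) (IZR z) t m); try (apply IZR_lt; nia); try lra; auto. }
  assert (H0 : forall k, (g * c <= Z.abs (L * z - k * M))%Z).
  { intros k. destruct (F3_le_each (IZR (g * a)) (IZR (g * b)) (IZR z) th) as [_ [_ Hd]].
    rewrite Hth in Hd. replace (th * IZR z) with (IZR (L * z) / IZR M) in Hd by (rewrite HthM; zr; field; lra).
    pose proof (d_frac_le (L * z) M k ltac:(unfold M, n; nia)).
    assert (Hq : IZR (g * c) / IZR M <= IZR (Z.abs (L * z - k * M)) / IZR M).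
    { replace (IZR (g * c) / IZR M) with m by (rewrite Hmc; unfold M; zr; field; lra). lra. }
    apply le_IZR. apply Rmult_le_reg_r with (/ IZR M). apply Rinv_0_lt_compat; auto. exact Hq. }
  destruct (bezout_n a b Hab) as [u [w Huw]]. fold n in Huw.
  assert (H' : forall r j, (c + 1 <= r <= n - c - 1)%Z ->
             exists k, (Z.abs ((r * u + n * j) * z - k * M) <= g * c - 1)%Z).
  { intros r j Hr. apply H. intros k.
    replace ((r * u + n * j) * a - k * n)%Z with (r - (k - j * a + r * w) * n)%Z.
    - apply r_far; auto.
    - replace (r * u * a)%Z with (r * (u * a))%Z by ring.
      assert (u * a = 1 - w * n)%Z by lia. nia. }
  assert (HLz : exists K, (L * z = c * (u * z) + K * n)%Z).
  { exists (u * p * z + L * w * z)%Z.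
    assert (L * a = c + p * n)%Z by (unfold c; ring).
    assert (L = L * (u * a + w * n))%Z by (rewrite Huw; ring).
    rewrite H2 at 1. nia. }
  destruct (Z.lt_total g 2) as [G1'|[G2'|G3']].
  -
    assert (g = 1)%Z by lia. subst g.
    set (W := (u * z)%Z).
    assert (HW : forall r, (c + 1 <= r <= n - c - 1)%Z -> exists k, (Z.abs (r * W - k * n) <= c - 1)%Z).
    { intros r Hr. destruct (H' r 0%Z Hr) as [k Hk]. exists k. unfold M, W in *.
      replace ((r * u + n * 0) * z - k * (1 * n))%Z with (r * (u * z) - k * n)%Z in Hk by ring. lia. }
    set (om := (W mod n)%Z). set (Q := (W / n)%Z).
    assert (HWd : W = (n * Q + om)%Z) by (apply Z.div_mod; unfold n; lia).
    assert (Hom : (0 <= om < n)%Z) by (apply Z.mod_pos_bound; unfold n; lia).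
    assert (Hom0 : om <> 0%Z).
    { intros E. destruct HLz as [K HK]. specialize (H0 (c * Q + K)%Z).
      unfold M in H0. fold W in HK. rewrite HK, HWd, E in H0.
      replace (c * (n * Q + 0) + K * n - (c * Q + K) * (1 * n))%Z with 0%Z in H0 by ring. change (Z.abs 0) with 0%Z in H0. lia. }
    destruct (Z_le_gt_dec (2 * om) n) as [Ho|Ho].
    + apply (G1 n c om); try lia.
      intros r Hr. destruct (HW r Hr) as [k Hk]. exists (k - r * Q)%Z.
      replace (r * om - (k - r * Q) * n)%Z with (r * W - k * n)%Z by (rewrite HWd; ring). exact Hk.
    + apply (G1 n c (n - om)); try lia.
      intros r Hr. destruct (HW r Hr) as [k Hk]. exists (r * Q + r - k)%Z.
      replace (r * (n - om) - (r * Q + r - k) * n)%Z with (- (r * W - k * n))%Z by (rewrite HWd; ring).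
      rewrite Z.abs_opp. exact Hk.
  -
    subst g.
    assert (Hzo : exists z', z = (2 * z' + 1)%Z).
    { destruct (Z.Even_or_Odd z) as [[z' Ez]|[z' Ez]]; [|exists z'; exact Ez].
      exfalso. assert (Hd : (2 | Z.gcd 2 z)%Z) by (apply Z.gcd_greatest; [exists 1%Z|exists z']; lia).
      rewrite Hgz in Hd. destruct Hd as [k Hk]. lia. }
    destruct Hzo as [z' Ez].
    set (W := (u * z)%Z).
    apply (G2 n c W); try lia.
    intros r Hr. destruct (H' r 0%Z Hr) as [k0 Hk0]. destruct (H' r 1%Z Hr) as [k1 Hk1].
    unfold M in Hk0, Hk1.
    set (e0 := (r * W - 2 * k0 * n)%Z). set (N1 := (2 * k1 - 2 * z' - 1)%Z). set (e1 := (r * W - N1 * n)%Z).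
    assert (He0 : (Z.abs e0 <= 2 * c - 1)%Z).
    { replace e0 with ((r * u + n * 0) * z - k0 * (2 * n))%Z by (unfold e0, W; ring). exact Hk0. }
    assert (He1 : (Z.abs e1 <= 2 * c - 1)%Z).
    { replace e1 with ((r * u + n * 1) * z - k1 * (2 * n))%Z by (unfold e1, N1, W; rewrite Ez; ring). exact Hk1. }
    set (D := (N1 - 2 * k0)%Z).
    assert (ED : (e0 - e1 = D * n)%Z) by (unfold e0, e1, D; ring).
    apply abs_le_iff in He0. apply abs_le_iff in He1.
    assert (HD : D = 1%Z \/ D = (-1)%Z).
    { assert (Dodd : D = (2 * (k1 - z' - k0) - 1)%Z) by (unfold D, N1; ring).
      destruct (Z.le_gt_cases D (-2)); [nia|]. destruct (Z.le_gt_cases 2 D); [nia|]. lia. }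
    destruct HD as [HD|HD].
    + exists (2 * k0)%Z. apply abs_le_iff.
      replace (2 * r * W - (2 * (2 * k0) + 1) * n)%Z with (e0 + e1)%Z by (unfold e0, e1, N1; unfold D in HD; nia).
      rewrite HD in ED. lia.
    + exists (2 * k0 - 1)%Z. apply abs_le_iff.
      replace (2 * r * W - (2 * (2 * k0 - 1) + 1) * n)%Z with (e0 + e1)%Z by (unfold e0, e1, N1; unfold D in HD; nia).
      rewrite HD in ED. lia.
  -
    assert (Hg3 : (3 <= g)%Z) by lia.
    apply Z.gcd_bezout in Hgz. destruct Hgz as [al [be Hbz]].
    set (L0 := ((c + 1) * u)%Z).
    set (rho := ((L0 * z) mod n)%Z). set (Q := ((L0 * z) / n)%Z).
    assert (HL0 : (L0 * z = n * Q + rho)%Z) by (apply Z.div_mod; unfold n; lia).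
    assert (Hrho : (0 <= rho < n)%Z) by (apply Z.mod_pos_bound; unfold n; lia).
    set (T := ((g * n + n - 2 * rho) / (2 * n))%Z).
    assert (HT : (2 * n * T <= g * n + n - 2 * rho < 2 * n * T + 2 * n)%Z).
    { pose proof (Z.div_mod (g * n + n - 2 * rho) (2 * n) ltac:(unfold n; lia)).
      pose proof (Z.mod_pos_bound (g * n + n - 2 * rho) (2 * n) ltac:(unfold n; lia)). fold T in H2. lia. }
    set (j := ((T - Q) * be)%Z).
    destruct (H' (c + 1)%Z j ltac:(lia)) as [k Hk].
    set (X := (rho + n * T)%Z). set (K' := (k + (T - Q) * al)%Z).
    assert (EX : ((((c + 1) * u + n * j) * z - k * M) = X - K' * (g * n))%Z).
    { unfold X, K', M, j. fold L0.
      replace ((L0 + n * ((T - Q) * be)) * z)%Z with (L0 * z + n * (T - Q) * (be * z))%Z by ring.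
      rewrite HL0. replace (be * z)%Z with (1 - al * g)%Z by lia. ring. }
    rewrite EX in Hk.
    assert (Hb2 : ((g - 1) * n <= 2 * Z.abs (X - K' * (g * n)))%Z).
    { assert (H2X : (g * n - n < 2 * X <= g * n + n)%Z) by (unfold X; lia).
      assert (Hgn : (0 <= g * n)%Z) by (unfold n; nia).
      assert (Hab1 : (X - K' * (g * n) <= Z.abs (X - K' * (g * n)))%Z) by lia.
      assert (Hab2 : (- (X - K' * (g * n)) <= Z.abs (X - K' * (g * n)))%Z) by lia.
      replace ((g - 1) * n)%Z with (g * n - n)%Z by ring.
      destruct (Z.le_gt_cases K' 0).
      - assert (K' * (g * n) <= 0)%Z by (apply Z.mul_nonpos_nonneg; lia).
        lia.
      - assert (K' * (g * n) >= g * n)%Z.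
        { replace (K' * (g * n))%Z with (g * n + (K' - 1) * (g * n))%Z by ring.
          assert (0 <= (K' - 1) * (g * n))%Z by (apply Z.mul_nonneg_nonneg; lia). lia. }
        lia. }
    assert (((g - 1) * n - 2 * g * c >= 4)%Z).
    { assert (g * (n - 2 * c) >= 3 * (n - 2 * c))%Z by (apply Z.le_ge; apply Z.mul_le_mono_nonneg_r; lia).
      replace ((g - 1) * n - 2 * g * c)%Z with (g * (n - 2 * c) - n)%Z by ring. lia. }
    lia.
Qed.
Lemma F3_swap12 a b c t : F3 a b c t = F3 b a c t.
Proof. unfold F3, Rmin. repeat destruct Rle_dec; lra. Qed.
Lemma F3_swap23 a b c t : F3 a b c t = F3 a c b t.
Proof. unfold F3, Rmin. repeat destruct Rle_dec; lra. Qed.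

Lemma gcd3_swap12 a b c : Z.gcd (Z.gcd a b) c = Z.gcd (Z.gcd b a) c.
Proof. rewrite (Z.gcd_comm a b). reflexivity. Qed.
Lemma gcd3_swap23 a b c : Z.gcd (Z.gcd a b) c = Z.gcd (Z.gcd a c) b.
Proof. rewrite <- !Z.gcd_assoc. rewrite (Z.gcd_comm b c). reflexivity. Qed.

Lemma core' (vi vj vk p q : Z) (m th : R) : (0 < vi)%Z -> (0 < vj)%Z -> (0 < vk)%Z ->
  Z.gcd (Z.gcd vi vj) vk = 1%Z ->
  (forall t, F3 (IZR vi) (IZR vj) (IZR vk) t <= m) -> F3 (IZR vi) (IZR vj) (IZR vk) th = m ->
  0 < m -> m < 1/3 -> th * IZR vi = IZR p + m -> th * IZR vj = IZR q - m ->
  exists s : Z, (1 <= s)%Z /\ m = IZR s / (3 * IZR s + 1).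
Proof.
  intros Hi Hj Hk Hg Hmax Hth Hm0 Hm3 Ep Eq.
  destruct (gcd_split vi vj Hi Hj) as [g [a [b [Hg0 [Ha [Hb [Ei [Ej [Hab Eg]]]]]]]]].
  rewrite <- Eg in Hg. subst vi vj.
  apply (core g a b vk p q m th); auto.
Qed.

Lemma F3_scale (d x y z : Z) t : F3 (IZR (d * x)) (IZR (d * y)) (IZR (d * z)) t = F3 (IZR x) (IZR y) (IZR z) (t * IZR d).
Proof. unfold F3. rewrite !mult_IZR. repeat rewrite <- Rmult_assoc. reflexivity. Qed.

Lemma part2 (X Y W : Z) m : (0 < X)%Z -> (0 < Y)%Z -> (0 < W)%Z ->
  (exists t, F3 (IZR X) (IZR Y) (IZR W) t = m) -> (forall t, F3 (IZR X) (IZR Y) (IZR W) t <= m) ->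
  (exists s : Z, (1 <= s)%Z /\ m = IZR s / (3 * IZR s + 1)) \/ m >= 1/3.
Proof.
  intros HX HY HW [th0 Hth0] Hmax0.
  destruct (Rlt_or_le m (1/3)) as [Hm3|Hm3]; [left|right; lra].
  destruct (gcd3_split X Y W HX HY HW) as [d [x [y [z [Hd [Hx [Hy [Hz [EX [EY [EW Hg]]]]]]]]]]].
  subst X Y W. rewrite F3_scale in Hth0.
  assert (Rd : 0 < IZR d) by (apply IZR_lt; lia).
  set (th := th0 * IZR d). fold th in Hth0.
  assert (Hmax : forall t, F3 (IZR x) (IZR y) (IZR z) t <= m).
  { intros t. pose proof (Hmax0 (t / IZR d)). rewrite F3_scale in H.
    replace (t / IZR d * IZR d) with t in H by (field; lra). exact H. }
  clear Hmax0.
  assert (Rx : 0 < IZR x) by (apply IZR_lt; lia).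
  assert (Ry : 0 < IZR y) by (apply IZR_lt; lia).
  assert (Rz : 0 < IZR z) by (apply IZR_lt; lia).
  assert (Hm0 : 0 < m).
  { set (S := IZR x + IZR y + IZR z). set (t0 := / (2 * S)).
    assert (HS : 0 < S) by (unfold S; lra).
    assert (Hv : forall v, 0 < v -> v <= S -> dist_int (t0 * v) = t0 * v).
    { intros v Hv1 Hv2. replace (t0 * v) with (IZR 0 + t0 * v) by ring. rewrite d_small. ring.
      unfold t0. split.
      - apply Rmult_le_pos; [left; apply Rinv_0_lt_compat; lra|lra].
      - apply Rmult_le_reg_l with (2 * S); [lra|]. rewrite <- Rmult_assoc, Rinv_r by lra. lra. }
    assert (Ht0 : 0 < t0) by (unfold t0; apply Rinv_0_lt_compat; lra).
    pose proof (Hmax t0). unfold F3 in H. rewrite !Hv in H by (unfold S; lra).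
    assert (0 < Rmin (Rmin (t0 * IZR x) (t0 * IZR y)) (t0 * IZR z)).
    { apply Rmin_glb_lt; [apply Rmin_glb_lt|]; apply Rmult_lt_0_compat; auto. }
    lra. }
  assert (Hmh : 0 < m < 1/2) by lra.
  destruct (crossing (IZR x) (IZR y) (IZR z) th m Rx Ry Rz Hmh Hmax Hth0) as [HP HM].
  destruct HP as [[p Hp]|[[p Hp]|[p Hp]]]; destruct HM as [[q Hq]|[[q Hq]|[q Hq]]];
  try (exfalso; eapply not_plus_minus; [exact Hmh| exists p; exact Hp | exists q; exact Hq]).
  - apply (core' x y z p q m th); auto.
  - apply (core' x z y p q m th); auto.
    + rewrite <- gcd3_swap23; auto.
    + intros t; rewrite <- F3_swap23; auto.
    + rewrite <- F3_swap23; auto.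
  - apply (core' y x z p q m th); auto.
    + rewrite <- gcd3_swap12; auto.
    + intros t; rewrite <- F3_swap12; auto.
    + rewrite <- F3_swap12; auto.
  - apply (core' y z x p q m th); auto.
    + rewrite <- gcd3_swap23, <- gcd3_swap12; auto.
    + intros t; rewrite <- F3_swap23, <- F3_swap12; auto.
    + rewrite <- F3_swap23, <- F3_swap12; auto.
  - apply (core' z x y p q m th); auto.
    + rewrite <- gcd3_swap12, <- gcd3_swap23; auto.
    + intros t; rewrite <- F3_swap12, <- F3_swap23; auto.
    + rewrite <- F3_swap12, <- F3_swap23; auto.
  - apply (core' z y x p q m th); auto.
    + rewrite <- gcd3_swap12, <- gcd3_swap23, <- gcd3_swap12; auto.
    + intros t; rewrite <- F3_swap12, <- F3_swap23, <- F3_swap12; auto.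
    + rewrite <- F3_swap12, <- F3_swap23, <- F3_swap12; auto.
Qed.

Lemma INR_Z (v : nat) : INR v = IZR (Z.of_nat v).
Proof. apply INR_IZR_INZ. Qed.

Theorem theorem2p1 :
  (forall v1 v2 : nat, (0 < v1)%nat -> (0 < v2)%nat ->
     (exists m, is_ML (v1 :: v2 :: nil) m) /\
     (forall m, is_ML (v1 :: v2 :: nil) m ->
        (exists s : nat, (1 <= s)%nat /\ m = INR s / (2 * INR s + 1)) \/ m = 1 / 2))
  /\
  (forall v1 v2 v3 : nat, (0 < v1)%nat -> (0 < v2)%nat -> (0 < v3)%nat ->
     (exists m, is_ML (v1 :: v2 :: v3 :: nil) m) /\
     (forall m, is_ML (v1 :: v2 :: v3 :: nil) m ->
        (exists s : nat, (1 <= s)%nat /\ m = INR s / (3 * INR s + 1)) \/ m >= 1 / 3)).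
Proof.
  split.
  - intros v1 v2 H1 H2. unfold is_ML. split.
    + destruct (F2_max (Z.of_nat v1) (Z.of_nat v2)) as [th Hth].
      exists (F2 (IZR (Z.of_nat v1)) (IZR (Z.of_nat v2)) th). split.
      * exists th. rewrite md2, !INR_Z. reflexivity.
      * intros t. rewrite md2, !INR_Z. apply Hth.
    + intros m [[th Hth] Hmax]. rewrite md2, !INR_Z in Hth.
      assert (Hmax' : forall t, F2 (IZR (Z.of_nat v1)) (IZR (Z.of_nat v2)) t <= m)
        by (intros t; specialize (Hmax t); rewrite md2, !INR_Z in Hmax; exact Hmax).
      destruct (part1 (Z.of_nat v1) (Z.of_nat v2) m ltac:(lia) ltac:(lia) (ex_intro _ th Hth) Hmax')
        as [[s [Hs Es]]|E]; [left|right; exact E].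
      exists (Z.to_nat s). split; [lia|]. rewrite INR_Z, Z2Nat.id by lia. exact Es.
  - intros v1 v2 v3 H1 H2 H3. unfold is_ML. split.
    + destruct (F3_max (Z.of_nat v1) (Z.of_nat v2) (Z.of_nat v3)) as [th Hth].
      exists (F3 (IZR (Z.of_nat v1)) (IZR (Z.of_nat v2)) (IZR (Z.of_nat v3)) th). split.
      * exists th. rewrite md3, !INR_Z. reflexivity.
      * intros t. rewrite md3, !INR_Z. apply Hth.
    + intros m [[th Hth] Hmax]. rewrite md3, !INR_Z in Hth.
      assert (Hmax' : forall t, F3 (IZR (Z.of_nat v1)) (IZR (Z.of_nat v2)) (IZR (Z.of_nat v3)) t <= m)
        by (intros t; specialize (Hmax t); rewrite md3, !INR_Z in Hmax; exact Hmax).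
      destruct (part2 (Z.of_nat v1) (Z.of_nat v2) (Z.of_nat v3) m ltac:(lia) ltac:(lia) ltac:(lia)
                  (ex_intro _ th Hth) Hmax') as [[s [Hs Es]]|E]; [left|right; exact E].
      exists (Z.to_nat s). split; [lia|]. rewrite INR_Z, Z2Nat.id by lia. exact Es.
Qed.
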